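(* If $W$ is a sunword, then $W$ is jump-free.
   Context: Multisuns: a multisun is a graph with no induced $K_4$ minus an edge, of odd order, whose maximal cliques of size $2$ form a Hamiltonian cycle $C$ (the rim); the other maximal cliques consist of pairwise nonconsecutive vertices of $C$ (inscribed cliques). A sub-multisun deletes the edge sets of some, but not all, inscribed cliques. An $AB$-path (inscribed cliques $A,B$, possibly equal) is a subpath of $C$ with one end in $A$, the other in $B$, internal vertices in no inscribed clique; $A$-path $=AA$-path; for $v\in B$ an $Av$-path is an $AB$-path ending at $v$ in $B$. N-conditions: (N1) every $A$-path has an even number $\ge4$ of vertices; (N2) inscribed cliques have odd size; (N3) all inscribed cliques share a vertex $\xi\in V(C)$ and are otherwise disjoint; (N4) every $A\xi$-path has an even number of vertices; (N5) for $A\ne B$ every $AB$-path has an odd number of vertices. A sunoid is a multisun such that it and all its sub-multisuns satisfy the N-conditions. Words: alphabet $\Sigma$ with distinguished letter $\epsilon$; $x^k$ is $k$ copies of $x$. The pattern $\pi(w)$ is obtained by repeatedly deleting $\epsilon\epsilon$. $v\sim w$ if related by cyclic shift and/or reversal; $u\approx v$ iff $\pi(u)\sim\pi(v)$; $[w]$ is the class (cyclic word). For a multisun satisfying the N-conditions, label rim vertices by $\sigma$ (in $\ge2$ inscribed cliques), by a letter specific to $X$ (only in inscribed clique $X$), or $\epsilon$ (in none); reading around the rim gives $w_G$ and $[w_G]$ is its s-word. An s-word is either (i) $[a^\lambda]$ ($\Sigma=\{\epsilon,a\}$, $\lambda$ odd) or (ii) $[\sigma x_{i_1}^{\lambda_1}\epsilon\cdots\epsilon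 x_{i_s}^{\lambda_s}]$ with positive $\lambda_j$, proper letters $x_{i_j}\in\Sigma\setminus\{\epsilon,\sigma\}$, $x_{i_h}\ne x_{i_{h+1}}$, each proper letter's exponents summing to an even number. A sunword is the s-word of a sunoid. Induced order (type (ii)): take a representative $\sigma u$ equal to its own pattern, replace each interval $xx$ of $u$ ($x$ proper) by $x\epsilon\epsilon x$ to get $z$, let $v=\sigma\epsilon\epsilon z\epsilon\epsilon=v_1\cdots v_N$ arranged cyclically; $\sigma$ is least and for proper $x\ne y$, $x\prec y$ iff the least cyclic distance from position $1$ to a position labeled $x$ is smaller than for $y$. Jumps (type (ii)): write $W=[x_{i_0}x_{i_1}^{\lambda_1}\epsilon\cdots\epsilon x_{i_s}^{\lambda_s}]$ with $x_{i_0}=\sigma$. Letters $x\preceq y$ of $\Sigma\setminus\{\epsilon\}$ form a cover pair if no $z\in\Sigma\setminus\{\epsilon\}$, $z\ne x,y$, has $x\prec z\prec y$. A jump is a pair of cyclically consecutive letters $x_{i_h},x_{i_{h+1}}$ ($h=0,\dots,s$, indices mod $s+1$) not forming a cover pair; $W$ is jump-free if it has no jump. An s-word of type (i) has no jumps. *)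

(* Defs.v *)
From mathcomp Require Import all_boot.
Set Implicit Arguments.
Unset Strict Implicit.
Unset Printing Implicit Defensive.

Section Words.
Variables (A : eqType) (eps sig : A).

(* pattern: repeatedly delete "eps eps" (computes the unique normal form) *)
Definition pattern (s : seq A) : seq A :=
  foldr (fun x acc => if acc is y :: t then
                        if (x == eps) && (y == eps) then t else x :: acc
                      else [:: x]) [::] s.

Definition cyc_equiv (v w : seq A) : Prop :=
  exists k, v = rot k w \/ v = rot k (rev w).

Definition proper (x : A) : bool := (x != eps) && (x != sig).

Fixpoint expand (s : seq A) : seq A :=
  match s with
  | x :: ((y :: _) as t) =>
      if (x == y) && proper x then x :: eps :: eps :: expand t
      else x :: expand t
  | _ => s
  end.

Fixpoint collapse (s : seq A) : seq A :=
  match s with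
  | x :: ((y :: _) as t) => if x == y then collapse t else x :: collapse t
  | _ => s
  end.

(* for a representative  sig u  equal to its own pattern:
   v = sig eps eps z eps eps *)
Definition vword (u : seq A) : seq A :=
  sig :: eps :: eps :: expand u ++ [:: eps; eps].

(* least cyclic distance from position 1 (index 0) to a position labelled x *)
Definition mindist (v : seq A) (x : A) : nat :=
  let N := size v in
  foldr minn N [seq minn j (N - j) | j <- iota 0 N & nth eps v j == x].

Definition prec (v : seq A) (x y : A) : Prop :=
  [/\ x != eps, y != eps, x \in v, y \in v &
    ((x = sig /\ y <> sig) \/
     [/\ x <> sig, y <> sig, x <> y & mindist v x < mindist v y])].

Definition cover (v : seq A) (x y : A) : Prop :=
  (x = y \/ prec v x y) /\
  ~ (exists z, [/\ z != eps, z <> x, z <> y, prec v x z & prec v z y]).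

Definition cover_pair (v : seq A) (a b : A) : Prop := cover v a b \/ cover v b a.

Definition letters (u : seq A) : seq A :=
  sig :: collapse (filter (predC1 eps) u).

Definition jump_free_rep (u : seq A) : Prop :=
  let v := vword u in
  let L := letters u in
  forall i, i < size L ->
    cover_pair v (nth sig L i) (nth sig L (i.+1 %% size L)).

(* jump-freeness of the cyclic word [w]: every representative starting
   with sig, reduced to its pattern, has no jump.  Words without sig
   (type (i)) have no jumps. *)
Definition jump_free (w : seq A) : Prop :=
  forall r t, cyc_equiv r w -> r = sig :: t -> jump_free_rep (pattern t).

End Words.

Section Graphs.
Variables (V : finType).

Definition clique (adj : rel V) (Q : {set V}) : bool :=
  [forall x in Q, [forall y in Q, (x != y) ==> adj x y]].

Definition maxclique (adj : rel V) (Q : {set V}) : bool :=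
  clique adj Q && [forall Q' : {set V}, (Q \proper Q') ==> ~~ clique adj Q'].

Definition inscribed (adj : rel V) (Q : {set V}) : bool :=
  maxclique adj Q && (#|Q| != 2).

Definition consec (c : seq V) (x y : V) : bool :=
  (y == next c x) || (x == next c y).

Definition no_induced_diamond (adj : rel V) : Prop :=
  forall a b x y : V, uniq [:: a; b; x; y] ->
    ~ [/\ adj a b, adj a x, adj a y, adj b x & adj b y /\ ~~ adj x y].

(* G = (V, adj) is a multisun with rim (Hamiltonian cycle) c *)
Definition multisun (adj : rel V) (c : seq V) : Prop :=
  [/\ [/\ symmetric adj, irreflexive adj, no_induced_diamond adj & odd #|V|],
      [/\ uniq c, (forall v, v \in c) & 3 <= size c],
      (forall x y, x != y -> (maxclique adj [set x; y] <-> consec c x y)) &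
      (forall Q, maxclique adj Q -> #|Q| != 2 ->
         forall x y, x \in Q -> y \in Q -> ~~ consec c x y)].

Definition in_none (adj : rel V) (w : V) : Prop :=
  forall Q, inscribed adj Q -> w \notin Q.

(* the subpath of the rim starting at u and going k >= 1 steps forward
   (k+1 vertices), first end in P, last end in Q, internal vertices in
   no inscribed clique *)
Definition rimpath (adj : rel V) (c : seq V) (u : V) (k : nat)
    (P Q : {set V}) : Prop :=
  [/\ 0 < k < size c, u \in P, iter k (next c) u \in Q &
      forall j, 0 < j < k -> in_none adj (iter j (next c) u)].

Definition N1 adj c : Prop := forall A u k, inscribed adj A ->
  rimpath adj c u k A A -> ~~ odd k.+1 /\ 4 <= k.+1.

Definition N2 adj : Prop := forall A, inscribed adj A -> odd #|A|.

Definition N3 adj (xi : V) : Prop :=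
  (forall A, inscribed adj A -> xi \in A) /\
  (forall A B, inscribed adj A -> inscribed adj B -> A != B ->
     A :&: B = [set xi]).

(* A xi-paths: AB-paths whose end in B is xi *)
Definition N4 adj c (xi : V) : Prop := forall A B u k,
  inscribed adj A -> inscribed adj B ->
  ((rimpath adj c u k A B /\ iter k (next c) u = xi) \/
   (rimpath adj c u k B A /\ u = xi)) ->
  ~~ odd k.+1.

Definition N5 adj c (xi : V) : Prop := forall A B u k,
  inscribed adj A -> inscribed adj B -> A != B ->
  rimpath adj c u k A B -> u <> xi -> iter k (next c) u <> xi ->
  odd k.+1.

Definition Ncond (adj : rel V) (c : seq V) : Prop :=
  N1 adj c /\ N2 adj /\ exists xi, [/\ N3 adj xi, N4 adj c xi & N5 adj c xi].

Definition del_cliques (adj : rel V) (S : {set {set V}}) : rel V :=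
  fun x y => adj x y && ~~ [exists Q in S, (x \in Q) && (y \in Q)].

Definition sunoid (adj : rel V) (c : seq V) : Prop :=
  [/\ multisun adj c, Ncond adj c &
      forall S : {set {set V}},
        (forall Q, Q \in S -> inscribed adj Q) ->
        (exists Q, inscribed adj Q /\ Q \notin S) ->
        Ncond (del_cliques adj S) c].

(* labels: None = eps, Some None = sigma, Some (Some X) = letter of X *)
Definition label (adj : rel V) (v : V) : option (option {set V}) :=
  let K := [set Q : {set V} | inscribed adj Q && (v \in Q)] in
  if 2 <= #|K| then Some None
  else if [pick Q in K] is Some Q then Some (Some Q) else None.

Definition rimword (adj : rel V) (c : seq V) : seq (option (option {set V})) :=
  map (label adj) c.

End Graphs.

(* Main.v *)
Require Import Defs.
From mathcomp Require Import all_boot zify.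
Set Implicit Arguments. Unset Strict Implicit. Unset Printing Implicit Defensive.

Section W.
Variables (A : eqType) (eps sig : A).

Lemma filter_pattern s : filter (predC1 eps) (pattern eps s) = filter (predC1 eps) s.
Proof.
elim: s => [|x s IH] //.
rewrite /pattern /= -/(pattern eps s).
case E: (pattern eps s) => [|y t].
  by rewrite -IH E.
case: ifP => [/andP[/eqP Hx /eqP Hy]|_].
  by rewrite Hx /= eqxx -IH E /= Hy eqxx.
by rewrite /= -IH E.
Qed.

Lemma filter_expand u : filter (predC1 eps) (expand eps sig u) = filter (predC1 eps) u.
Proof.
elim: u => [|x u IH] //.
case: u IH => [|y u] IH //=.
case: ifP => _ /=; last by rewrite IH.
by rewrite eqxx /= IH.
Qed.

Fixpoint nestb (x y : A) (px py : bool) (s : seq A) : bool :=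
  if s is a :: s' then
    [&& (a == y) ==> px, (a == x) ==> ~~ py &
        nestb x y (px (+) (a == x)) (py (+) (a == y)) s']
  else ~~ px.

Lemma nestb_filter x y px py s :
  nestb x y px py (filter (fun a => (a == x) || (a == y)) s) = nestb x y px py s.
Proof.
elim: s px py => [|a s IH] px py //=.
case: ifP => H /=; first by rewrite IH.
move/negbT: H; rewrite negb_or => /andP[/negbTE -> /negbTE ->] /=.
by rewrite !addbF IH.
Qed.

Lemma nestb_eq x y s1 s2 px py :
  filter (fun a => (a == x) || (a == y)) s1 = filter (fun a => (a == x) || (a == y)) s2 ->
  nestb x y px py s1 = nestb x y px py s2.
Proof. by move=> E; rewrite -nestb_filter E nestb_filter. Qed.

Lemma nestb_pos x y px py s d :
  nestb x y px py s ->
  [/\ px (+) odd (count_mem x s) = false,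
      forall j, j < size s -> nth d s j = y -> px (+) odd (count_mem x (take j s)) &
      forall j, j < size s -> nth d s j = x -> ~~ (py (+) odd (count_mem y (take j s)))].
Proof.
elim: s px py => [|a s IH] px py /=.
  by move/negbTE => ->; split => //.
case/and3P => H1 H2 /IH [K1 K2 K3]; split.
- by rewrite oddD oddb addbA K1.
- case=> [|j] /= Hj.
    by move=> E; move: H1; rewrite E eqxx addbF.
  move=> /K2 -/(_ Hj). by rewrite oddD oddb addbA.
- case=> [|j] /= Hj.
    by move=> E; move: H2; rewrite E eqxx addbF.
  move=> /K3 -/(_ Hj). by rewrite oddD oddb addbA.
Qed.

Lemma pos_nestb x y px py s d :
  px (+) odd (count_mem x s) = false ->
  (forall j, j < size s -> nth d s j = y -> px (+) odd (count_mem x (take j s))) ->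
  (forall j, j < size s -> nth d s j = x -> ~~ (py (+) odd (count_mem y (take j s)))) ->
  nestb x y px py s.
Proof.
elim: s px py => [|a s IH] px py /=.
  by rewrite addbF => ->.
move=> K1 K2 K3; apply/and3P; split.
- by apply/implyP => /eqP E; move: (K2 0 erefl E); rewrite /= addbF.
- by apply/implyP => /eqP E; move: (K3 0 erefl E); rewrite /= addbF.
apply: IH.
- by move: K1; rewrite /= oddD oddb addbA.
- move=> j Hj E; move: (K2 j.+1 Hj E) => /=.
  by rewrite oddD oddb addbA.
- move=> j Hj E; move: (K3 j.+1 Hj E) => /=.
  by rewrite oddD oddb addbA.
Qed.

Lemma foldr_minn_le N l e : e \in l -> foldr minn N l <= e.
Proof.
elim: l => [|a l IH] //=; rewrite in_cons => /orP[/eqP->|/IH H].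
  exact: geq_minl.
exact: leq_trans (geq_minr _ _) H.
Qed.

Lemma foldr_minn_gt N l m : m < N -> all (fun e => m < e) l -> m < foldr minn N l.
Proof.
move=> HN; elim: l => [|a l IH] //= /andP[Ha Hl].
by rewrite ltn_min Ha IH.
Qed.

Lemma mindist_le v x j : j < size v -> nth eps v j = x ->
  mindist eps v x <= minn j (size v - j).
Proof.
move=> Hj E; rewrite /mindist; apply: foldr_minn_le.
apply/mapP; exists j => //; rewrite mem_filter mem_iota /= E eqxx; lia.
Qed.

Lemma mindist_gt v x m : m < size v ->
  (forall j, j < size v -> nth eps v j = x -> m < minn j (size v - j)) ->
  m < mindist eps v x.
Proof.
move=> HN H; rewrite /mindist; apply: foldr_minn_gt => //.
apply/allP => e /mapP [j]; rewrite mem_filter mem_iota => /andP[/eqP E /andP[_ Hj]] ->.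
apply: H => //; lia.
Qed.

Lemma mindist_nest v x y : x != y -> nestb x y false false v -> y \in v ->
  mindist eps v x < mindist eps v y.
Proof.
move=> Nxy /(nestb_pos eps) [K1 K2 _] Yv.
set N := size v.
have key : forall j, j < N -> nth eps v j = y ->
    exists i1 i2, [/\ i1 < j, j < i2, i2 < N, nth eps v i1 = x & nth eps v i2 = x].
  move=> j Hj Ej; have Ho := K2 j Hj Ej; rewrite /= in Ho.
  have : x \in take j v by rewrite -has_pred1 has_count (odd_gt0 Ho).
  move=> Xt.
  have : x \in drop j v.
    rewrite -has_pred1 has_count.
    have := congr1 (count_mem x) (cat_take_drop j v); rewrite count_cat => Ec.
    move: K1; rewrite /= -Ec oddD Ho /=.
    by move/negbFE/odd_gt0.
  move=> Xd.
  have Hsj : size (take j v) = j by rewrite size_take Hj.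
  exists (index x (take j v)), (j + index x (drop j v)).
  have I1 : index x (take j v) < j by move: Xt; rewrite -index_mem Hsj.
  have I2 : index x (drop j v) < N - j by move: Xd; rewrite -index_mem size_drop.
  have E2 : nth eps v (j + index x (drop j v)) = x by rewrite -nth_drop nth_index.
  split => //.
  - case E0: (index x (drop j v)) => [|k]; last by lia.
    by move: E2; rewrite E0 addn0 Ej => /eqP; rewrite eq_sym (negbTE Nxy).
  - lia.
  - by rewrite -(nth_take _ I1) nth_index.
have [j0 [Hj0 Ej0]] : exists j, j < N /\ nth eps v j = y.
  by exists (index y v); rewrite index_mem nth_index.
have [i1 [i2 [A1 A2 A3 A4 A5]]] := key j0 Hj0 Ej0.
have Hm := mindist_le (ltn_trans A1 Hj0) A4.
apply: mindist_gt; first by apply: leq_ltn_trans Hm _; apply: leq_ltn_trans (geq_minl _ _) _; lia.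
move=> j Hj Ej; have [k1 [k2 [B1 B2 B3 B4 B5]]] := key j Hj Ej.
have M1 := mindist_le (ltn_trans B1 Hj) B4.
have M2 := mindist_le B3 B5.
rewrite ltn_min; apply/andP; split.
  by apply: leq_ltn_trans M1 _; apply: leq_ltn_trans (geq_minl _ _) _.
apply: leq_ltn_trans M2 _; apply: leq_ltn_trans (geq_minr _ _) _; lia.
Qed.

End W.
Set Implicit Arguments. Unset Strict Implicit. Unset Printing Implicit Defensive.

Lemma consec_ind (m : nat -> bool) (P : nat -> Prop) i0 :
  m i0 -> P i0 ->
  (forall i j, i0 <= i -> i < j -> m i -> m j -> (forall l, i < l < j -> ~~ m l) ->
     P i -> P j) ->
  forall j, i0 <= j -> m j -> P j.
Proof.
move=> m0 P0 step.
have claim : forall k, exists i, [/\ i0 <= i <= i0 + k, m i, P i &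
                     forall l, i < l <= i0 + k -> ~~ m l].
  elim=> [|k [i [H1 H2 H3 H4]]].
    exists i0; split => //; first by rewrite addn0 leqnn.
    move=> l; lia.
  case E: (m (i0 + k.+1)).
    exists (i0 + k.+1); split => //; first by rewrite leq_addr leqnn.
      apply: (step i) => //; first by case/andP: H1.
        by case/andP: H1 => _ H; rewrite addnS ltnS.
      move=> l /andP[Hl1 Hl2]; apply: H4; rewrite Hl1 /=; lia.
    move=> l; lia.
  exists i; split => //; first by case/andP: H1 => -> H /=; rewrite addnS; lia.
  move=> l /andP[Hl1 Hl2].
  case: (ltngtP l (i0 + k.+1)) Hl2 => // [Hlt _|-> _]; last by rewrite E.
  by apply: H4; rewrite Hl1 /=; rewrite addnS ltnS in Hlt.
move=> j Hj mj; have [i [H1 H2 H3 H4]] := claim (j - i0).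
rewrite (subnKC Hj) in H1 H4.
case/andP: H1 => _ Hij.
case: (ltngtP i j) Hij => // [Hlt _|<- //].
by move: (H4 j); rewrite Hlt leqnn mj => /(_ isT).
Qed.

Section W2.
Variables (A : eqType) (eps : A) (r : seq A) (X Y : A).
Hypotheses (HXe : X != eps) (HYe : Y != eps) (HXY : X != Y).
Let n := size r.
Hypothesis (Hn : odd n).
Hypothesis (H0X : nth eps r 0 != X) (H0Y : nth eps r 0 != Y).

Definition HA (Z : A) := forall i j, i < j -> j <= n ->
  (i == 0) || (nth eps r i == Z) -> (j == n) || (nth eps r j == Z) ->
  (forall l, i < l < j -> nth eps r l != Z) -> odd (j - i).

Definition HAB (Z W : A) := forall i j, 0 < i -> i < j -> j < n ->
  nth eps r i = Z -> nth eps r j = W ->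
  (forall l, i < l < j -> (nth eps r l != Z) && (nth eps r l != W)) -> ~~ odd (j - i).

Definition cnt Z i := count_mem Z (take i r).

Lemma cnt_step Z i : Z != eps -> cnt Z i.+1 = cnt Z i + (nth eps r i == Z).
Proof.
move=> HZ; rewrite /cnt.
case: (ltnP i (size r)) => Hi.
  by rewrite (take_nth eps Hi) -cats1 count_cat /= addn0.
rewrite !take_oversize ?(leq_trans Hi) // nth_default //.
by rewrite eq_sym (negbTE HZ) addn0.
Qed.

Lemma cnt_gap Z i j : Z != eps -> i < j -> (forall l, i < l < j -> nth eps r l != Z) ->
  cnt Z j = cnt Z i + (nth eps r i == Z).
Proof.
move=> HZ; elim: j => [|j IH] // Hij Hb.
rewrite cnt_step //.
case: (ltngtP i j) Hij => [Hlt _|Hgt Hij|-> _] //; last by lia.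
rewrite IH // ?(negbTE (Hb j _)) ?addn0 //; first by rewrite Hlt /=.
by move=> l /andP[H1 H2]; apply: Hb; rewrite H1 /=; lia.
Qed.

Lemma nth_Z_lt Z j : Z != eps -> nth eps r j = Z -> j < n.
Proof.
move=> HZ E; case: (ltnP j n) => // H.
by move: HZ; rewrite -E nth_default // eqxx.
Qed.

Lemma PA Z : Z != eps -> nth eps r 0 != Z -> HA Z ->
  (forall i, 0 < i -> nth eps r i = Z -> odd (i + cnt Z i)) /\ ~~ odd (count_mem Z r).
Proof.
move=> HZ H0 HAZ.
pose m i := (i == 0) || (nth eps r i == Z) || (i == n).
pose P i := (i == 0) || odd (i + cnt Z i).
have key : forall j, m j -> P j.
  move=> j; apply: (consec_ind (m := m) (P := P) (i0 := 0)) => //.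
  move=> i k _ Hik mi mk Hb Pi.
  have Hkn : k <= n.
    move: mk; rewrite /m => /orP[/orP[/eqP E|/eqP E]|/eqP E].
    - lia.
    - exact: ltnW (nth_Z_lt HZ E).
    - lia.
  have Hin : i != n by apply/eqP => E; lia.
  have Hmi : (i == 0) || (nth eps r i == Z).
    by move: mi; rewrite /m (negbTE Hin) orbF.
  have Hbl : forall l, i < l < k -> nth eps r l != Z.
    by move=> l Hl; move: (Hb l Hl); rewrite /m !negb_or => /andP[/andP[_ ->]].
  have Hodd : odd (k - i).
    apply: HAZ => //.
    move: mk; rewrite /m => /orP[/orP[/eqP E|->]|->] //; [lia|by rewrite orbT].
  have Hc : cnt Z k = cnt Z i + (nth eps r i == Z) by apply: cnt_gap.
  rewrite /P; apply/orP; right.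
  have Ek : odd k = odd (k - i) (+) odd i by rewrite oddB ?(ltnW Hik) // -addbA addbb addbF.
  rewrite oddD Ek Hc oddD oddb Hodd.
  case/orP: Hmi => [/eqP Ei0|HiZ].
    by rewrite Ei0 (negbTE H0) /cnt take0.
  rewrite HiZ.
  have Hi0 : i != 0 by apply/eqP => E; move: H0; rewrite -E HiZ.
  move: Pi; rewrite /P (negbTE Hi0) /= oddD.
  by case: (odd i); case: (odd (cnt Z i)).
split.
  move=> i Hi E; have := key i; rewrite /m /P E eqxx orbT => /(_ isT).
  by case: eqP Hi => [->|].
have := key n; rewrite /m /P eqxx !orbT => /(_ isT).
case: eqP => [En|_] /=; first by move: Hn; rewrite En.
rewrite /cnt take_oversize // oddD Hn.
by case: odd.
Qed.


Lemma nest_dich : HA X -> HA Y -> HAB X Y -> HAB Y X ->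
  nestb X Y false false r \/ nestb Y X false false r.
Proof.
move=> HAX HAY HXY' HYX'.
have [PAX TX] := PA HXe H0X HAX.
have [PAY TY] := PA HYe H0Y HAY.
pose m i := (nth eps r i == X) || (nth eps r i == Y).
pose F i := odd i (+) odd (cnt X i) (+) odd (cnt Y i) (+) (nth eps r i == X).
have HYX : Y != X by rewrite eq_sym.
have stp : forall i j, i < j -> m i -> m j -> (forall l, i < l < j -> ~~ m l) -> F j = F i.
  move=> i j Hij mi mj Hb.
  have Hjn : j < n by case/orP: mj => /eqP E; [apply: nth_Z_lt HXe E|apply: nth_Z_lt HYe E].
  have Hi0 : 0 < i.
    case: i Hij mi Hb => // _; rewrite /m => /orP[/eqP E|/eqP E].
      by move: H0X; rewrite E eqxx.
    by move: H0Y; rewrite E eqxx.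
  have HbX : forall l, i < l < j -> nth eps r l != X.
    by move=> l Hl; move: (Hb l Hl); rewrite /m negb_or => /andP[].
  have HbY : forall l, i < l < j -> nth eps r l != Y.
    by move=> l Hl; move: (Hb l Hl); rewrite /m negb_or => /andP[].
  have HbXY : forall l, i < l < j -> (nth eps r l != X) && (nth eps r l != Y).
    by move=> l Hl; move: (Hb l Hl); rewrite /m negb_or.
  have HbYX : forall l, i < l < j -> (nth eps r l != Y) && (nth eps r l != X).
    by move=> l Hl; move: (Hb l Hl); rewrite /m negb_or andbC.
  have Hcx := cnt_gap HXe Hij HbX.
  have Hcy := cnt_gap HYe Hij HbY.
  have Ej : odd j = odd (j - i) (+) odd i by rewrite oddB ?(ltnW Hij) // -addbA addbb addbF.
  rewrite /F Ej Hcx Hcy !oddD !oddb.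
  move: (odd i) (odd (cnt X i)) (odd (cnt Y i)) => a b c.
  case/orP: mi => /eqP Ei; case/orP: mj => /eqP Ejj; rewrite Ei Ejj ?eqxx ?(negbTE HXY) ?(negbTE HYX).
  - have := HAX i j Hij (ltnW Hjn); rewrite Ei Ejj eqxx !orbT => /(_ isT isT HbX) ->.
    by case: a; case: b; case: c.
  - have := HXY' i j Hi0 Hij Hjn Ei Ejj HbXY => /negbTE ->.
    by case: a; case: b; case: c.
  - have := HYX' i j Hi0 Hij Hjn Ei Ejj HbYX => /negbTE ->.
    by case: a; case: b; case: c.
  - have := HAY i j Hij (ltnW Hjn); rewrite Ei Ejj eqxx !orbT => /(_ isT isT HbY) ->.
    by case: a; case: b; case: c.
have Fc1 : forall i j, i <= j -> m i -> m j -> F j = F i.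
  move=> i j Hij mi mj.
  apply: (consec_ind (m := m) (P := fun k => F k = F i) (i0 := i)) => //.
  move=> k l _ Hkl mk ml Hb Pk; rewrite -Pk; exact: stp.
have Fc : forall i j, m i -> m j -> F j = F i.
  move=> i j mi mj; case: (leqP i j) => H; first exact: Fc1.
  by rewrite (Fc1 j i (ltnW H)).
have mlt : forall j, m j -> j < n.
  by move=> j /orP[/eqP E|/eqP E]; [apply: nth_Z_lt HXe E|apply: nth_Z_lt HYe E].
have mpos : forall j, m j -> 0 < j.
  case=> // /orP[/eqP E|/eqP E]; [by move: H0X; rewrite E eqxx|by move: H0Y; rewrite E eqxx].
case: (boolP (has m (iota 0 n))) => [/hasP[i0 _ m0]|Hno].
  case Ek: (F i0).
  - right; apply: (pos_nestb (d:=eps)).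
    + by rewrite (negbTE TY).
    + move=> j Hj E; have mj : m j by apply/orP; left; rewrite E eqxx.
      have := Fc i0 j m0 mj; rewrite Ek /F E eqxx.
      have := PAX j (mpos j mj) E; rewrite /cnt oddD => Hp.
      by move: Hp; case: (odd j); case: (odd (count_mem X (take j r))); case: (odd (count_mem Y (take j r))).
    + move=> j Hj E; have mj : m j by apply/orP; right; rewrite E eqxx.
      have := Fc i0 j m0 mj; rewrite Ek /F E (negbTE HYX) addbF.
      have := PAY j (mpos j mj) E; rewrite /cnt oddD => Hp.
      by move: Hp; case: (odd j); case: (odd (count_mem X (take j r))); case: (odd (count_mem Y (take j r))).
  - left; apply: (pos_nestb (d:=eps)).
    + by rewrite (negbTE TX).
    + move=> j Hj E; have mj : m j by apply/orP; right; rewrite E eqxx.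
      have := Fc i0 j m0 mj; rewrite Ek /F E (negbTE HYX) addbF.
      have := PAY j (mpos j mj) E; rewrite /cnt oddD => Hp.
      by move: Hp; case: (odd j); case: (odd (count_mem X (take j r))); case: (odd (count_mem Y (take j r))).
    + move=> j Hj E; have mj : m j by apply/orP; left; rewrite E eqxx.
      have := Fc i0 j m0 mj; rewrite Ek /F E eqxx.
      have := PAX j (mpos j mj) E; rewrite /cnt oddD => Hp.
      by move: Hp; case: (odd j); case: (odd (count_mem X (take j r))); case: (odd (count_mem Y (take j r))).
left; apply: (pos_nestb (d:=eps)).
- by rewrite (negbTE TX).
- move=> j Hj E; case/hasP: Hno; exists j; first by rewrite mem_iota.
  by apply/orP; right; rewrite E eqxx.
- move=> j Hj E; case/hasP: Hno; exists j; first by rewrite mem_iota.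
  by apply/orP; left; rewrite E eqxx.
Qed.

End W2.
Set Implicit Arguments. Unset Strict Implicit. Unset Printing Implicit Defensive.

Fixpoint ppath (A : Type) (R : A -> A -> Prop) x s : Prop :=
  if s is y :: s' then R x y /\ ppath R y s' else True.

Lemma ppath_collapse (A : eqType) (R : A -> A -> Prop) x s z :
  ppath R x (rcons s z) -> ppath R x (rcons (collapse s) z).
Proof.
elim: s x => [|a s IH] x //.
case: s IH => [|b s] IH //.
move=> /= [Hxa Hrest].
case: ifP => [/eqP Eab|_].
  subst b; apply: IH; split => //.
  by move: Hrest => /= [].
by split => //; apply: IH.
Qed.

Lemma ppath_nth (A : Type) (R : A -> A -> Prop) x s :
  ppath R x s <-> forall i, i < size s -> R (nth x (x :: s) i) (nth x s i).
Proof.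
elim: s x => [|a s IH] x /=; first by split.
split.
  move=> [Hxa /IH H] [|i] Hi //=.
  have E1 : nth x (a :: s) i = nth a (a :: s) i by apply: set_nth_default => /=; lia.
  have E2 : nth x s i = nth a s i by apply: set_nth_default.
  by rewrite E1 E2; apply: H.
move=> H; split; first exact: (H 0).
apply/IH => i Hi.
have := H i.+1 Hi => /=.
suff -> : nth x (a :: s) i = nth a (a :: s) i.
  suff -> : nth x s i = nth a s i by [].
  by apply: set_nth_default.
by case: i Hi => //= i Hi; apply: set_nth_default; lia.
Qed.

Section W3.
Variables (A : eqType) (eps sig : A) (t : seq A).
Hypotheses (Hes : eps != sig) (Hsig : sig \notin t).
Hypothesis Hd : forall x y, x \in t -> y \in t -> x != eps -> y != eps -> x != y ->
  nestb x y false false (sig :: t) \/ nestb y x false false (sig :: t).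

Let u := pattern eps t.
Let f := filter (predC1 eps) t.
Let v := vword eps sig u.

Lemma fv : filter (predC1 eps) v = sig :: f.
Proof.
rewrite /v /vword /= eq_sym Hes eqxx /= filter_cat filter_expand filter_pattern /=.
by rewrite eqxx cats0.
Qed.

Lemma memf a : (a \in f) = (a \in t) && (a != eps).
Proof. by rewrite mem_filter andbC. Qed.

Lemma f_neps a : a \in f -> a != eps.
Proof. by rewrite memf => /andP[]. Qed.

Lemma f_nsig a : a \in f -> a != sig.
Proof. by rewrite memf => /andP[H _]; apply/eqP => E; move: Hsig; rewrite -E H. Qed.

Lemma memv a : a != eps -> (a \in v) = (a == sig) || (a \in f).
Proof.
move=> Ha.
have : (a \in filter (predC1 eps) v) = (a \in v) by rewrite mem_filter /= Ha.
by rewrite fv in_cons => <-.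
Qed.

Lemma f_v a : a \in f -> a \in v.
Proof. by move=> H; rewrite memv ?f_neps // H orbT. Qed.

Definition NF x y := nestb x y false false f.

Lemma filt_eq x y : x \in f -> y \in f ->
  let P := fun a => (a == x) || (a == y) in
  filter P f = filter P (sig :: t) /\ filter P v = filter P f.
Proof.
move=> Hx Hy P.
have Psig : P sig = false.
  by rewrite /P; apply/negbTE; rewrite negb_or !(eq_sym sig) f_nsig ?f_nsig.
have Peps : P eps = false.
  by rewrite /P; apply/negbTE; rewrite negb_or !(eq_sym eps) f_neps ?f_neps.
have Pn : forall a, P a -> a != eps.
  by move=> a Pa; apply/eqP => E; move: Pa; rewrite E Peps.
split.
  rewrite /= Psig /f -filter_predI; apply: eq_filter => a /=.
  by apply: andb_idr => /Pn.
have : filter P v = filter P (filter (predC1 eps) v).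
  rewrite -filter_predI; apply: eq_filter => a /=.
  by apply/esym; apply: andb_idr => /Pn.
by rewrite fv /= Psig.
Qed.

Lemma dich x y : x \in f -> y \in f -> x != y -> NF x y \/ NF y x.
Proof.
move=> Hx Hy Nxy.
have [E1 _] := filt_eq Hx Hy.
have [E2 _] := filt_eq Hy Hx.
have Hxt : x \in t by move: Hx; rewrite memf => /andP[].
have Hyt : y \in t by move: Hy; rewrite memf => /andP[].
case: (Hd Hxt Hyt (f_neps Hx) (f_neps Hy) Nxy) => H; [left|right].
  by rewrite /NF (nestb_eq _ _ E1).
rewrite /NF (nestb_eq _ _ E2) //.
Qed.

Lemma md x y : x \in f -> y \in f -> x != y -> NF x y -> mindist eps v x < mindist eps v y.
Proof.
move=> Hx Hy Nxy H.
have [_ E] := filt_eq Hx Hy.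
apply: mindist_nest => //; last exact: f_v.
by rewrite (nestb_eq _ _ E).
Qed.

Lemma prec_sig z : prec eps sig v z sig -> False.
Proof. by case=> _ _ _ _ [[_ []]|[_ []]]. Qed.

Lemma prec_asym a b : prec eps sig v a b -> prec eps sig v b a -> False.
Proof.
case=> _ _ _ _ [[Ea Nb]|[Na Nb _ L1]]; case=> _ _ _ _ [[Eb Na']|[Nb' Na' _ L2]] //.
by move: (ltn_trans L1 L2); rewrite ltnn.
Qed.

Lemma prec_f z y : prec eps sig v z y -> z != sig -> z \in f.
Proof.
case=> Hz _ Hzv _ _ Nz.
by move: Hzv; rewrite memv // (negbTE Nz).
Qed.

Lemma prec_md x y : x != sig -> prec eps sig v x y -> mindist eps v x < mindist eps v y.
Proof. by move=> Nx [_ _ _ _ [[E _]|[_ _ _ L]]] //; move: Nx; rewrite E eqxx. Qed.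

Lemma prec_NF x y : x \in f -> y \in f -> x != y -> prec eps sig v x y -> NF x y.
Proof.
move=> Hx Hy Nxy P.
case: (dich Hx Hy Nxy) => // H.
have L1 := prec_md (f_nsig Hx) P.
have Nyx : y != x by rewrite eq_sym.
have L2 := md Hy Hx Nyx H.
by move: (ltn_trans L1 L2); rewrite ltnn.
Qed.

Lemma NF_prec x y : x \in f -> y \in f -> x != y -> NF x y -> prec eps sig v x y.
Proof.
move=> Hx Hy Nxy H; split; rewrite ?f_neps ?f_v //.
right; split; [apply/eqP; exact: f_nsig|apply/eqP; exact: f_nsig|exact/eqP|exact: md].
Qed.

Lemma cp_refl a : cover_pair eps sig v a a.
Proof.
left; split; first by left.
by case=> z [_ _ _ H1 H2]; apply: (prec_asym H1 H2).
Qed.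

Lemma cover_sig a : a \in f ->
  (forall z, z \in f -> z != a -> NF z a -> False) ->
  Defs.cover eps sig v sig a.
Proof.
move=> Ha Hz; split.
  right; split.
  - by rewrite eq_sym.
  - exact: f_neps.
  - by rewrite memv ?eqxx // eq_sym.
  - exact: f_v.
  - by left; split => //; apply/eqP; exact: f_nsig.
case=> z [Nze Nzs Nza P1 P2].
have Zf : z \in f by apply: (prec_f P2); apply/eqP.
have Nza' : z != a by apply/eqP.
case: (dich Zf Ha Nza') => H; first exact: (Hz z Zf Nza' H).
have L1 := prec_md (f_nsig Zf) P2.
have Naz : a != z by rewrite eq_sym.
have L2 := md Ha Zf Naz H.
by move: (ltn_trans L1 L2); rewrite ltnn.
Qed.

Lemma jfr : jump_free_rep eps sig u.
Proof.
rewrite /jump_free_rep /letters -/v filter_pattern -/f.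
set cf := collapse f.
have Pf : ppath (cover_pair eps sig v) sig (rcons f sig).
  apply/ppath_nth => i; rewrite size_rcons ltnS => Hi.
  have -> : nth sig (sig :: rcons f sig) i = nth sig (sig :: f) i.
    by case: i Hi => // i Hi /=; rewrite nth_rcons_default.
  rewrite nth_rcons_default.
  case: i Hi => [|k] Hk /=.
    case Ef: f => [|a f'] /=; first exact: cp_refl.
    have Ha : a \in f by rewrite Ef mem_head.
    left; apply: cover_sig => // z Zf Nza Hn.
    have [_ K _] := nestb_pos sig Hn.
    have := K 0; rewrite Ef /= => /(_ isT erefl).
    by [].
  case: (ltngtP k.+1 (size f)) Hk => // [Hlt _|Eq _]; last first.
    rewrite (nth_default _ (eq_leq (esym Eq))).
    have Ha : nth sig f k \in f by apply: mem_nth; lia.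
    right; apply: cover_sig => // z Zf Nza Hn.
    have [K0 K _] := nestb_pos sig Hn.
    have := K k; rewrite -Eq => /(_ (ltnSn _) erefl) /=.
    have Hdr : drop k.+1 f = [::] by apply: drop_oversize; rewrite Eq.
    move: K0; rewrite -{1}(cat_take_drop k f) count_cat (drop_nth sig); last by lia.
    rewrite Hdr /= eq_sym (negbTE Nza) addn0 addn0 => E.
    by rewrite E.
  set x := nth sig f k; set y := nth sig f k.+1.
  have Hx : x \in f by apply: mem_nth; lia.
  have Hy : y \in f by apply: mem_nth.
  case: (eqVneq x y) => [<-|Nxy]; first exact: cp_refl.
  have Tk : take k.+1 f = rcons (take k f) x by rewrite (take_nth sig); last lia.
  case: (dich Hx Hy Nxy) => H.
    left; split; first by right; apply: NF_prec.
    case=> z [Nze Nzx Nzy P1 P2].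
    have Nzs : z != sig by apply/eqP => E; rewrite E in P1; exact: prec_sig P1.
    have Zf : z \in f := prec_f P2 Nzs.
    have H1 : NF x z by apply: prec_NF => //; apply/eqP => E; apply: Nzx; rewrite E.
    have H2 : NF z y by apply: prec_NF => //; apply/eqP.
    have [_ _ K1] := nestb_pos sig H1.
    have [_ K2 _] := nestb_pos sig H2.
    have := K1 k (ltn_trans (ltnSn k) Hlt) erefl.
    have := K2 k.+1 Hlt erefl.
    rewrite Tk -cats1 count_cat /= addn0.
    have -> : (x == z) = false by apply/eqP => E; apply: Nzx; rewrite E.
    by rewrite addn0 => ->.
  right; split; first by right; apply: NF_prec => //; rewrite eq_sym.
  case=> z [Nze Nzy Nzx P1 P2].
  have Nzs : z != sig by apply/eqP => E; rewrite E in P1; exact: prec_sig P1.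
  have Zf : z \in f := prec_f P2 Nzs.
  have H1 : NF y z by apply: prec_NF => //; apply/eqP => E; apply: Nzy; rewrite E.
  have H2 : NF z x by apply: prec_NF => //; apply/eqP.
  have [_ _ K1] := nestb_pos sig H1.
  have [_ K2 _] := nestb_pos sig H2.
  have := K2 k (ltn_trans (ltnSn k) Hlt) erefl.
  have := K1 k.+1 Hlt erefl.
  rewrite Tk -cats1 count_cat /= addn0.
  have -> : (x == z) = false by apply/eqP => E; apply: Nzx; rewrite E.
  by rewrite addn0 => /negbTE ->.
have Pc := ppath_collapse Pf.
move=> i Hi.
have Hmod : nth sig (sig :: cf) (i.+1 %% size (sig :: cf)) = nth sig (rcons cf sig) i.
  rewrite nth_rcons_default.
  case: (ltngtP i.+1 (size (sig :: cf))) Hi => // [Hlt _|Eq _].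
    by rewrite modn_small.
  by rewrite Eq modnn /= nth_default //; move: Eq => /= [->].
rewrite Hmod; clear Hmod.
have := (iffLR (ppath_nth _ _ _) Pc) i; rewrite size_rcons => /(_ Hi).
suff -> : nth sig (sig :: rcons cf sig) i = nth sig (sig :: cf) i by [].
by case: i Hi => // i Hi /=; rewrite nth_rcons_default.
Qed.

End W3.
Set Implicit Arguments. Unset Strict Implicit. Unset Printing Implicit Defensive.

Section G1.
Variables (V : finType) (adj : rel V) (c : seq V) (xi : V).

Lemma cliqueP (a : rel V) (Q : {set V}) :
  reflect (forall x y, x \in Q -> y \in Q -> x != y -> a x y) (clique a Q).
Proof.
apply: (iffP forall_inP) => H.
  by move=> x y Hx Hy Nxy; move: (H x Hx) => /forall_inP /(_ y Hy) /implyP; apply.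
by move=> x Hx; apply/forall_inP => y Hy; apply/implyP; apply: H.
Qed.

Lemma maxcliqueP (a : rel V) (Q : {set V}) :
  maxclique a Q -> clique a Q /\ forall Q' : {set V}, Q \proper Q' -> ~~ clique a Q'.
Proof.
case/andP => H1 /forallP H2; split => // Q' HQ.
by move: (H2 Q') => /implyP; apply.
Qed.

Hypotheses (Hcu : uniq c) (Hca : forall v, v \in c) (Hc3 : 3 <= size c).
Hypothesis H3 : forall x y, x != y -> (maxclique adj [set x; y] <-> consec c x y).
Hypothesis H4 : forall Q, maxclique adj Q -> #|Q| != 2 ->
  forall x y, x \in Q -> y \in Q -> ~~ consec c x y.
Hypothesis HN3 : N3 adj xi.

Lemma next_neq v : v != next c v.
Proof.
have Hv := Hca v.
case E: c Hcu Hv Hc3 => [|y p] // U Hv H3'.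
have Hi : index v (y :: p) < (size p).+1 by rewrite -[(size p).+1]/(size (y :: p)) index_mem.
have Ev : nth y (y :: p) (index v (y :: p)) = v by rewrite nth_index.
rewrite next_nth Hv; move: Hi Ev; set i := index v (y :: p) => Hi Ev /=.
case: (ltngtP i (size p)) Hi => [Hlt _|Hgt Hi|Eq _].
- have : nth y (y :: p) i != nth y (y :: p) i.+1.
    by rewrite nth_uniq //= ?ltnS ?(ltnW Hlt) // eqn_leq ltnn andbF.
  by rewrite Ev.
- lia.
- rewrite Eq nth_default // .
  have : nth y (y :: p) i != nth y (y :: p) 0.
    rewrite nth_uniq //= ?Eq //; by move: H3' => /=; case: (size p).
  by rewrite Ev.
Qed.

Lemma inter_xi A B x : inscribed adj A -> inscribed adj B -> A != B ->
  x \in A -> x \in B -> x = xi.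
Proof.
move=> IA IB NAB HA HB; have [_ H] := HN3.
have : x \in A :&: B by rewrite inE HA HB.
by rewrite (H A B IA IB NAB) inE => /eqP.
Qed.

Variable S : {set {set V}}.
Hypothesis HS : forall Q, Q \in S -> inscribed adj Q.
Let adj' := del_cliques adj S.

Lemma del_sub x y : adj' x y -> adj x y.
Proof. by case/andP. Qed.

Lemma clique_del Q : inscribed adj Q -> Q \notin S -> clique adj' Q.
Proof.
move=> IQ NQ; have CQ : clique adj Q by case/andP: IQ => /andP[].
apply/cliqueP => x y Hx Hy Nxy; apply/andP; split; first by move/cliqueP: CQ; apply.
apply/existsP => -[Q' /andP[HQ' /andP[Hx' Hy']]].
have NQQ : Q != Q' by apply/eqP => E; move: NQ; rewrite E HQ'.
have IQ' := HS HQ'.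
have Ex := inter_xi IQ IQ' NQQ Hx Hx'.
have Ey := inter_xi IQ IQ' NQQ Hy Hy'.
by move: Nxy; rewrite Ex Ey eqxx.
Qed.

Lemma clique_mono Q : clique adj' Q -> clique adj Q.
Proof.
by move/cliqueP => H; apply/cliqueP => x y Hx Hy Nxy; apply: del_sub; apply: H.
Qed.

Lemma ins_del1 Q : inscribed adj Q -> Q \notin S -> inscribed adj' Q.
Proof.
move=> IQ NQ; have := IQ; case/andP => /maxcliqueP [_ MQ] H2.
rewrite /inscribed H2 andbT /maxclique clique_del //=.
apply/forallP => Q'; apply/implyP => HP; apply/negP => /clique_mono.
by apply/negP; apply: MQ.
Qed.

Lemma ins_del2 Q : inscribed adj' Q -> inscribed adj Q /\ Q \notin S.
Proof.
case/andP => /maxcliqueP [CQ MQ] H2.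
have CQa := clique_mono CQ.
have Hc2 : 1 < #|Q|.
  rewrite ltnNge; apply/negP => Hle.
  have [v Hv] : exists v, Q \subset [set v].
    case: (set_0Vmem Q) => [->|[v Hv]]; first by exists xi; rewrite sub0set.
    exists v; apply/subsetP => z Hz; rewrite inE; apply/eqP.
    by move/card_le1_eqP: Hle => /(_ z v Hz Hv).
  set w := next c v.
  have Nvw : v != w by apply: next_neq.
  have Cw : clique adj' [set v; w].
    apply/cliqueP => x y; rewrite !inE => Hx Hy Nxy.
    have Hc : consec c v w by rewrite /consec eqxx.
    have [Cvw _] := maxcliqueP (iffRL (H3 Nvw) Hc).
    have Avw : adj x y by move/cliqueP: Cvw; apply => //; rewrite !inE.
    apply/andP; split => //.
    apply/existsP => -[Q' /andP[HQ' /andP[Hx' Hy']]].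
    have IQ' := HS HQ'; case/andP: IQ' => MQ' N2.
    have [Hv' Hw'] : v \in Q' /\ w \in Q'.
      move: Nxy Hx' Hy'.
      by case/orP: Hx => /eqP ->; case/orP: Hy => /eqP ->; rewrite ?eqxx // => _ H1 H2.
    by move: (H4 MQ' N2 Hv' Hw'); rewrite Hc.
  have : Q \proper [set v; w].
    rewrite properEcard cards2 Nvw ltnS Hle andbT.
    by apply: subset_trans Hv _; apply/subsetP => z; rewrite !inE => ->.
  move/MQ; by rewrite Cw.
have [M /maxsetP [CM MM] QM] := maxset_exists (P := clique adj) CQa.
have MCM : maxclique adj M.
  rewrite /maxclique CM /=; apply/forallP => B; apply/implyP => PB; apply/negP => CB.
  have := MM B CB (proper_sub PB) => E.
  by move: PB; rewrite E properxx.
have Hc3' : 2 < #|M|.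
  have := subset_leq_card QM.
  move: H2; case: (ltngtP 2 #|Q|) => //; lia.
have IM : inscribed adj M by rewrite /inscribed MCM /=; lia.
have NMS : M \notin S.
  apply/negP => HMS.
  have [x [y [Hx Hy Nxy]]] := card_gt1P Hc2.
  move/cliqueP: CQ => /(_ x y Hx Hy Nxy) /andP [_ /existsP []].
  by exists M; rewrite HMS (subsetP QM x Hx) (subsetP QM y Hy).
have CMd := clique_del IM NMS.
case: (eqVneq Q M) => [->|NQM]; first by [].
have : Q \proper M by rewrite properEneq NQM QM.
by move/MQ; rewrite CMd.
Qed.

End G1.
Set Implicit Arguments. Unset Strict Implicit. Unset Printing Implicit Defensive.

Section G2.
Variables (V : finType) (adj : rel V) (c : seq V) (xi : V).
Hypothesis Hsun : sunoid adj c.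
Hypothesis HN3 : N3 adj xi.

Lemma sun_facts :
  [/\ uniq c, (forall v, v \in c), 2 < size c, odd (size c) &
   [/\ (forall x y, x != y -> (maxclique adj [set x; y] <-> consec c x y)),
       (forall Q, maxclique adj Q -> #|Q| != 2 ->
          forall x y, x \in Q -> y \in Q -> ~~ consec c x y) &
       forall S : {set {set V}},
        (forall Q, Q \in S -> inscribed adj Q) ->
        (exists Q, inscribed adj Q /\ Q \notin S) ->
        Ncond (del_cliques adj S) c]].
Proof.
case: Hsun => [[[_ _ _ Ho] [Hu Ha H3c] H3 H4] _ Hsub].
split => //.
suff <- : #|V| = size c by [].
rewrite -(card_uniqP Hu); apply: eq_card => v; by rewrite !inE Ha.
Qed.

Lemma ins_del2' (S : {set {set V}}) (Q : {set V}) : (forall Q, Q \in S -> inscribed adj Q) ->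
  inscribed (del_cliques adj S) Q -> inscribed adj Q /\ Q \notin S.
Proof.
have [Hu Ha H3c _ [H3 H4 _]] := sun_facts.
move=> HS; exact: (ins_del2 Hu Ha H3c H3 H4 HN3 HS).
Qed.

Lemma label_some v Q : label adj v = Some (Some Q) -> inscribed adj Q /\ v \in Q.
Proof.
rewrite /label; case: ifP => // _; case: pickP => // Q' HQ' [<-].
by move: HQ'; rewrite inE => /andP.
Qed.

Lemma label_sig v : label adj v = Some None -> v = xi.
Proof.
rewrite /label; case: ifP => [H _|_]; last by case: pickP.
have [Q1 [Q2 [H1 H2 N12]]] := card_gt1P H.
move: H1 H2; rewrite !inE => /andP[I1 V1] /andP[I2 V2].
exact: (inter_xi HN3 I1 I2 N12 V1 V2).
Qed.

Lemma label_in A v : inscribed adj A -> v \in A -> v != xi -> label adj v = Some (Some A).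
Proof.
move=> IA VA Nv; rewrite /label.
have Hle : #|[set Q | inscribed adj Q && (v \in Q)]| < 2.
  rewrite ltnNge; apply/negP => H.
  have [Q1 [Q2 [H1 H2 N12]]] := card_gt1P H.
  move: H1 H2; rewrite !inE => /andP[I1 V1] /andP[I2 V2].
  by move: Nv; rewrite (inter_xi HN3 I1 I2 N12 V1 V2) eqxx.
rewrite leqNgt Hle /=.
case: pickP => [Q|H0]; last by move: (H0 A); rewrite inE IA VA.
rewrite inE => /andP[IQ VQ].
case: (eqVneq Q A) => [->|NQA] //.
by move: Nv; rewrite (inter_xi HN3 IQ IA NQA VQ VA) eqxx.
Qed.

Lemma xi_in A : inscribed adj A -> xi \in A.
Proof. by case: HN3 => H _; apply: H. Qed.

Variable d : seq V.
Hypotheses (Hdu : uniq d) (Hds : size d = size c) (Hd0 : nth xi d 0 = xi).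
Hypothesis Hor : (forall i, i < size c -> next c (nth xi d i) = nth xi d i.+1) \/
                 (forall i, i < size c -> next c (nth xi d i.+1) = nth xi d i).
Let n := size c.
Let D i := nth xi d i.

Lemma Dn : D n = xi.
Proof. by rewrite /D nth_default // Hds. Qed.

Lemma D_neq i : 0 < i < n -> D i != xi.
Proof.
move=> /andP[H1 H2]; rewrite /D -{2}Hd0 nth_uniq ?Hds //; rewrite /n in H2; [by apply/eqP; lia|lia].
Qed.

Lemma iter_f i m : (forall i, i < n -> next c (D i) = D i.+1) -> i + m <= n ->
  iter m (next c) (D i) = D (i + m).
Proof.
move=> Hf; elim: m => [|m IH] H; first by rewrite addn0.
by rewrite iterS IH ?Hf; [rewrite addnS| lia| lia].
Qed.

Lemma iter_b j m : (forall i, i < n -> next c (D i.+1) = D i) -> m <= j -> j <= n ->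
  iter m (next c) (D j) = D (j - m).
Proof.
move=> Hb; elim: m => [|m IH] H1 H2; first by rewrite subn0.
rewrite iterS IH; [|lia|lia].
have -> : j - m = (j - m.+1).+1 by lia.
by rewrite Hb; [|lia].
Qed.

Lemma rimpath_D (a : rel V) (P Q : {set V}) i j :
  i < j -> j <= n -> j - i < n -> D i \in P -> D j \in Q ->
  (forall l, i < l < j -> in_none a (D l)) ->
  (rimpath a c (D i) (j - i) P Q /\ iter (j - i) (next c) (D i) = D j) \/
  (rimpath a c (D j) (j - i) Q P /\ iter (j - i) (next c) (D j) = D i).
Proof.
move=> Hij Hjn Hk HP HQ Hin.
case: Hor => [Hf|Hb]; [left|right].
  have E : iter (j - i) (next c) (D i) = D j.
    by rewrite (iter_f Hf); [congr D; lia|lia].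
  split => //; split => //; first by apply/andP; split; lia.
    by rewrite E.
  move=> m Hm; rewrite (iter_f Hf); last by lia.
  by apply: Hin; lia.
have E : iter (j - i) (next c) (D j) = D i.
  by rewrite (iter_b Hb); [congr D; lia|lia|lia].
split => //; split => //; first by apply/andP; split; lia.
  by rewrite E.
move=> m Hm; rewrite (iter_b Hb); [|lia|lia].
by apply: Hin; lia.
Qed.

Let r := map (label adj) d.

Lemma nth_r i : i < n -> nth None r i = label adj (D i).
Proof. by move=> H; rewrite /r (nth_map xi) // Hds. Qed.

Lemma nth_r_ge i : n <= i -> nth None r i = None.
Proof. by move=> H; rewrite nth_default // size_map Hds. Qed.

Lemma r_X_in A i : 0 < i -> nth None r i = Some (Some A) -> i < n /\ D i \in A.
Proof.
move=> Hi; case: (ltnP i n) => Hin; last by rewrite nth_r_ge.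
by rewrite nth_r // => /label_some [].
Qed.

Lemma r_in_X A i : inscribed adj A -> 0 < i < n -> D i \in A -> nth None r i = Some (Some A).
Proof.
move=> IA Hi HA; rewrite nth_r; last by case/andP: Hi.
by apply: label_in => //; apply: D_neq.
Qed.

Lemma graph_HA A : inscribed adj A ->
  forall i j, i < j -> j <= n ->
  (i == 0) || (nth None r i == Some (Some A)) -> (j == n) || (nth None r j == Some (Some A)) ->
  (forall l, i < l < j -> nth None r l != Some (Some A)) -> odd (j - i).
Proof.
move=> IA i j Hij Hjn Hi Hj Hb.
have [Hu Ha H3c Ho [H3 H4 Hsub]] := sun_facts.
case: (boolP ((i == 0) && (j == n))) => [/andP[/eqP -> /eqP ->]|Hne].
  by rewrite subn0.
have Hk : j - i < n.
  move: Hne; rewrite negb_and => /orP[/negbTE|/negbTE] H.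
    move: Hi; rewrite H /= => /eqP /(r_X_in) []; lia.
  by move: H => /eqP; lia.
set S := [set Q | inscribed adj Q && (Q != A)].
have HS : forall Q, Q \in S -> inscribed adj Q by move=> Q; rewrite inE => /andP[].
have AS : A \notin S by rewrite inE eqxx andbF.
have [HN1 _] := Hsub S HS (ex_intro _ A (conj IA AS)).
have DiA : D i \in A.
  case: (posnP i) => [->|Hi0]; first by rewrite /D Hd0; apply: xi_in.
  case/orP: Hi => [/eqP E|/eqP H]; first by move: Hi0; rewrite E.
  by have [] := r_X_in Hi0 H.
have DjA : D j \in A.
  case/orP: Hj => [/eqP ->|/eqP H]; first by rewrite Dn; apply: xi_in.
  by have [] := r_X_in (leq_ltn_trans (leq0n _) Hij) H.
have Hin : forall l, i < l < j -> in_none (del_cliques adj S) (D l).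
  move=> l Hl Q IQ.
  have [IQa QS] := ins_del2' HS IQ.
  have EQ : Q = A by move: QS; rewrite inE IQa /= negbK => /eqP.
  subst Q; apply/negP => HlA.
  by move: (Hb l Hl); rewrite (r_in_X IA); [rewrite eqxx| clear -Hl Hjn; lia| exact: HlA].
have IAd : inscribed (del_cliques adj S) A by apply: (ins_del1 HN3 HS IA AS).
case: (rimpath_D Hij Hjn Hk DiA DjA Hin) => [[R _]|[R _]].
  by have := HN1 _ _ _ IAd R => [[H _]]; move: H; rewrite /=; case: odd.
by have := HN1 _ _ _ IAd R => [[H _]]; move: H; rewrite /=; case: odd.
Qed.

Lemma graph_HAB A B : inscribed adj A -> inscribed adj B -> A != B ->
  forall i j, 0 < i -> i < j -> j < n ->
  nth None r i = Some (Some A) -> nth None r j = Some (Some B) ->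
  (forall l, i < l < j -> (nth None r l != Some (Some A)) && (nth None r l != Some (Some B))) ->
  ~~ odd (j - i).
Proof.
move=> IA IB NAB i j Hi Hij Hjn Ri Rj Hb.
have [Hu Ha H3c Ho [H3 H4 Hsub]] := sun_facts.
set S := [set Q | inscribed adj Q && (Q != A) && (Q != B)].
have HS : forall Q, Q \in S -> inscribed adj Q by move=> Q; rewrite inE => /andP[/andP[]].
have AS : A \notin S by rewrite inE eqxx andbF andFb.
have BS : B \notin S by rewrite inE eqxx andbF.
have [_ [_ [xi' [[HN3a _] _ HN5]]]] := Hsub S HS (ex_intro _ A (conj IA AS)).
have IAd : inscribed (del_cliques adj S) A by apply: (ins_del1 HN3 HS IA AS).
have IBd : inscribed (del_cliques adj S) B by apply: (ins_del1 HN3 HS IB BS).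
have Exi : xi' = xi by apply: (inter_xi HN3 IA IB NAB); apply: HN3a.
subst xi'.
have [_ DiA] := r_X_in Hi Ri.
have [_ DjB] := r_X_in (ltn_trans Hi Hij) Rj.
have Hin : forall l, i < l < j -> in_none (del_cliques adj S) (D l).
  move=> l Hl Q IQ.
  have [IQa QS] := ins_del2' HS IQ.
  move: QS; rewrite inE IQa /= negb_and !negbK => /orP[/eqP EQ|/eqP EQ]; subst Q;
    apply/negP => HlQ; move: (Hb l Hl).
    by rewrite (r_in_X IA); [rewrite eqxx| clear -Hl Hjn Hij Hi; lia| exact: HlQ].
  by rewrite (r_in_X IB); [rewrite eqxx andbF| clear -Hl Hjn Hij Hi; lia| exact: HlQ].
have Hk : j - i < n by clear -Hi Hjn Hij; lia.
have Nxi : D i <> xi by apply/eqP; apply: D_neq; clear -Hi Hjn Hij; lia.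
have Nxj : D j <> xi by apply/eqP; apply: D_neq; clear -Hi Hjn Hij; lia.
case: (rimpath_D Hij (ltnW Hjn) Hk DiA DjB Hin) => [[R E]|[R E]].
  have := HN5 _ _ _ _ IAd IBd NAB R Nxi; rewrite E => /(_ Nxj).
  by rewrite /=; case: odd.
have NBA : B != A by rewrite eq_sym.
have := HN5 _ _ _ _ IBd IAd NBA R Nxj; rewrite E => /(_ Nxi).
by rewrite /=; case: odd.
Qed.

End G2.
Unset Implicit Arguments. Set Strict Implicit.

Lemma next_d_nth (V : eqType) (xi : V) e i :
  uniq (xi :: e) -> i < size (xi :: e) ->
  next (xi :: e) (nth xi (xi :: e) i) = nth xi (xi :: e) i.+1.
Proof.
move=> U Hi; rewrite next_nth mem_nth //.
by rewrite index_uniq.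
Qed.

Theorem theorem4 (V : finType) (adj : rel V) (c : seq V) :
  sunoid adj c ->
  jump_free None (Some None) (rimword adj c).
Proof.
move=> Hsun r t [k Er] Ert.
have Hsun' := Hsun.
case: Hsun' => [[[_ _ _ Ho] [Hu Ha H3c] _ _] [_ [_ [xi [HN3 _ _]]]] _].
have [d [Erd Hdu Hds Hor]] : exists d, [/\ r = map (label adj) d, uniq d, size d = size c &
    (forall x, next d x = next c x) \/ (forall x, next d x = prev c x)].
  case: Er => ->.
    exists (rot k c); rewrite /rimword map_rot rot_uniq size_rot; split => //.
    by left => x; rewrite next_rot.
  exists (rot k (rev c)); rewrite /rimword map_rot map_rev rot_uniq rev_uniq size_rot size_rev.
  split => //; right => x; rewrite next_rot ?rev_uniq // next_rev //.
case: d Erd Hdu Hds Hor => [|v0 e] Erd Hdu Hds Hor.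
  by move: Hds H3c => <-.
move: Erd; rewrite Ert /= => -[Ev0 Et].
have Exi : v0 = xi by apply: (label_sig HN3); rewrite -Ev0.
subst v0.
have Hd0 : nth xi (xi :: e) 0 = xi by [].
have Hor' : (forall i, i < size c -> next c (nth xi (xi :: e) i) = nth xi (xi :: e) i.+1) \/
            (forall i, i < size c -> next c (nth xi (xi :: e) i.+1) = nth xi (xi :: e) i).
  case: Hor => H; [left|right] => i Hi.
    by rewrite -H next_d_nth // Hds.
  rewrite -next_d_nth ?Hds // H next_prev //.
have Hsig : Some None \notin t.
  rewrite Et; apply/mapP => -[v Hv Ev].
  have Evx := label_sig HN3 (esym Ev); subst v.
  by move: Hdu => /= /andP[/negP H _]; apply: H.
have Hsr : size (Some None :: t) = size c by rewrite Et /= size_map -Hds.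
have Hr : Some None :: t = map (label adj) (xi :: e) by rewrite Et Ev0.
apply: jfr => //.
move=> x y Hx Hy Nx Ny Nxy.
have getA : forall z, z \in t -> z != None -> exists A, z = Some (Some A) /\ inscribed adj A.
  move=> z Hz Nz; have Hz' := Hz; rewrite Et in Hz'.
  case/mapP: Hz' => v _ Ez.
  case: z Hz Nz Ez => [[A|]|] Hz Nz Ez //.
    by exists A; split => //; have [] := label_some (esym Ez).
  by move: Hsig; rewrite Hz.
have [A [EA IA]] := getA x Hx Nx.
have [B [EB IB]] := getA y Hy Ny.
subst x y.
have NAB : A != B by apply/eqP => E; move: Nxy; rewrite E eqxx.
have NBA : B != A by rewrite eq_sym.
apply: (@nest_dich _ None) => //.
- by rewrite Hsr; have [_ _ _ Hoc _] := sun_facts Hsun.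
- move=> i j; rewrite Hsr Hr; exact: (graph_HA Hsun HN3 Hdu Hds Hd0 Hor' IA).
- move=> i j; rewrite Hsr Hr; exact: (graph_HA Hsun HN3 Hdu Hds Hd0 Hor' IB).
- move=> i j; rewrite Hsr Hr; exact: (graph_HAB Hsun HN3 Hdu Hds Hd0 Hor' IA IB NAB).
- move=> i j; rewrite Hsr Hr; exact: (graph_HAB Hsun HN3 Hdu Hds Hd0 Hor' IB IA NBA).
Qed.
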